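(* Grounded semantics is serialisable with the selection function $\alpha_{gr}(X,Y,Z)=X$ and the termination function $\beta_{co}(F,S)=1$ if $\mathrm{IS}^u(F)=\emptyset$ and $\beta_{co}(F,S)=0$ otherwise.
   Context: An abstract argumentation framework (AF) is a pair $F=(A,R)$ with $A$ a finite subset of a fixed universal set of arguments $\mathfrak{A}$ and $R\subseteq A\times A$ ($a\to b$ means $(a,b)\in R$). For $S\subseteq A$: $S^+=\{a\mid \exists b\in S: b\to a\}$, $S^-=\{a\mid\exists b\in S: a\to b\}$; for sets $S,S'$, $S\to S'$ means $S^+\cap S'\neq\emptyset$. $S$ is admissible if it is conflict-free and every attacker of an element of $S$ is attacked by some element of $S$. A complete extension is an admissible set containing every argument it defends; the grounded extension is the inclusion-minimal complete extension, and grounded semantics assigns to $F$ the set containing it. An initial set is a non-empty admissible set with no non-empty admissible proper subset; $\mathrm{IS}(F)$ is the set of initial sets. An initial set $S$ is unattacked if $S^-=\emptyset$; unchallenged if $S^-\neq\emptyset$ and no $S'\in\mathrm{IS}(F)$ has $S'\to S$; challenged if some $S'\in\mathrm{IS}(F)$ has $S'\to S$. Write $\mathrm{IS}^{u}(F),\mathrm{IS}^{uc}(F),\mathrm{IS}^{c}(F)$ for these sets. The reduct is $F^S=(A',R\cap(A'\times A'))$ with $A'=A\setminus(S\cup S^+)$. A selection function $\alpha$ maps any three sets $X,Y,Z$ of sets of arguments to a subset of $X\cup Y\cup Z$; a termination function $\beta$ maps pairs $(F,S)$ to $\{0,1\}$. Transitions: $(F,S)\to(F^{S'},S\cup S')$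 whenever $S'\in\alpha(\mathrm{IS}^u(F),\mathrm{IS}^{uc}(F),\mathrm{IS}^c(F))$. $(F,S)\leadsto^{\alpha,\beta}(F',S')$ means $(F',S')$ is reachable from $(F,S)$ in finitely many (possibly zero) transitions and $\beta(F',S')=1$. $\mathcal{E}^{\alpha,\beta}(F)$ is the set of all $S$ with $(F,\emptyset)\leadsto^{\alpha,\beta}(F',S)$ for some $F'$. A semantics $\sigma$ is serialisable with $\alpha,\beta$ if $\sigma(F)=\mathcal{E}^{\alpha,\beta}(F)$ for all AFs $F$. *)

(* Defs.v *)
From mathcomp Require Import all_boot.
From Stdlib Require Import Relation_Operators.
Set Implicit Arguments. Unset Strict Implicit. Unset Printing Implicit Defensive.

Section AF.
Variable T : finType.

Definition AF := ({set T} * {set T * T})%type.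
Definition args (F : AF) : {set T} := F.1.
Definition att (F : AF) (a b : T) : bool := (a, b) \in F.2.
Definition wf_AF (F : AF) : bool := F.2 \subset setX F.1 F.1.

Definition plus (F : AF) (S : {set T}) : {set T} :=
  [set a | [exists b in S, att F b a]].
Definition minus (F : AF) (S : {set T}) : {set T} :=
  [set a | [exists b in S, att F a b]].
Definition set_attacks (F : AF) (S S' : {set T}) : bool :=
  plus F S :&: S' != set0.

Definition conflict_free (F : AF) (S : {set T}) : bool :=
  [forall a in S, forall b in S, ~~ att F a b].
Definition defends (F : AF) (S : {set T}) (a : T) : bool :=
  [forall b, att F b a ==> [exists c in S, att F c b]].
Definition admissible (F : AF) (S : {set T}) : bool :=
  [&& S \subset args F, conflict_free F S & [forall a in S, defends F S a]].
Definition complete (F : AF) (S : {set T}) : bool :=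
  admissible F S && [forall a in args F, defends F S a ==> (a \in S)].
Definition grounded_ext (F : AF) (S : {set T}) : Prop :=
  complete F S /\ forall S', complete F S' -> S' \subset S -> S' = S.
Definition grounded_sem (F : AF) (S : {set T}) : Prop := grounded_ext F S.

Definition initial (F : AF) (S : {set T}) : bool :=
  [&& S != set0, admissible F S &
      [forall S' : {set T}, (S' \proper S) ==> ~~ ((S' != set0) && admissible F S')]].
Definition IS (F : AF) : {set {set T}} := [set S | initial F S].
Definition IS_u (F : AF) : {set {set T}} :=
  [set S in IS F | minus F S == set0].
Definition IS_uc (F : AF) : {set {set T}} :=
  [set S in IS F | (minus F S != set0) && ~~ [exists S' in IS F, set_attacks F S' S]].
Definition IS_c (F : AF) : {set {set T}} :=
  [set S in IS F | [exists S' in IS F, set_attacks F S' S]].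

Definition reduct (F : AF) (S : {set T}) : AF :=
  let A' := args F :\: (S :|: plus F S) in (A', F.2 :&: setX A' A').

Definition selection_fun :=
  {alpha : {set {set T}} -> {set {set T}} -> {set {set T}} -> {set {set T}} |
    forall X Y Z, alpha X Y Z \subset X :|: Y :|: Z}.
Definition termination_fun := AF -> {set T} -> bool.

Definition state := (AF * {set T})%type.
Definition trans (alpha : selection_fun) (s s' : state) : Prop :=
  exists2 S', S' \in proj1_sig alpha (IS_u s.1) (IS_uc s.1) (IS_c s.1) &
    s' = (reduct s.1 S', s.2 :|: S').
Definition reach (alpha : selection_fun) : state -> state -> Prop :=
  clos_refl_trans state (trans alpha).
Definition leadsto (alpha : selection_fun) (beta : termination_fun) (s s' : state) : Prop :=
  reach alpha s s' /\ beta s'.1 s'.2.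
Definition ext_ab (alpha : selection_fun) (beta : termination_fun) (F : AF) (S : {set T}) : Prop :=
  exists F', leadsto alpha beta (F, set0) (F', S).

Definition serialisable (sigma : AF -> {set T} -> Prop)
  (alpha : selection_fun) (beta : termination_fun) : Prop :=
  forall F : AF, wf_AF F -> forall S : {set T}, sigma F S <-> ext_ab alpha beta F S.

Lemma alpha_gr_sub : forall X Y Z : {set {set T}}, X \subset X :|: Y :|: Z.
Proof. by move=> X Y Z; rewrite -setUA subsetUl. Qed.
Definition alpha_gr : selection_fun := exist _ (fun X _ _ => X) alpha_gr_sub.
Definition beta_co : termination_fun := fun F _ => IS_u F == set0.
End AF.

(* Main.v *)
Require Import Defs.
From mathcomp Require Import all_boot.
From Stdlib Require Import Relation_Operators Operators_Properties.
Set Implicit Arguments. Unset Strict Implicit. Unset Printing Implicit Defensive.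

Section Proof.
Variable T : finType.
Variable F : AF T.
Hypothesis wfF : wf_AF F.

Lemma wf_att a b : att F a b -> (a \in args F) && (b \in args F).
Proof. by move/subsetP: wfF => wf ab; have := wf _ ab; rewrite in_setX. Qed.

Lemma in_plus (G : AF T) S x : (x \in plus G S) = [exists b in S, att G b x].
Proof. by rewrite inE. Qed.

Lemma args_red S x :
  (x \in args (reduct F S)) = [&& x \notin S, x \notin plus F S & x \in args F].
Proof. by rewrite /args /reduct /= in_setD in_setU negb_or andbA. Qed.

Lemma att_red S a b : att (reduct F S) a b =
  [&& att F a b, a \in args (reduct F S) & b \in args (reduct F S)].
Proof. by rewrite /att /reduct /args /= in_setI in_setX. Qed.

Lemma single_ISu (G : AF T) a : a \in args G -> (forall b, ~~ att G b a) ->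
  [set a] \in IS_u G.
Proof.
move=> aA na.
have adm : admissible G [set a].
  rewrite /admissible sub1set aA /=; apply/andP; split.
    apply/forallP=> x; apply/implyP; rewrite in_set1 => /eqP ->.
    apply/forallP=> y; apply/implyP; rewrite in_set1 => /eqP ->; exact: na.
  apply/forallP=> x; apply/implyP; rewrite in_set1 => /eqP ->.
  by apply/forallP=> b; rewrite (negbTE (na b)).
rewrite /IS_u /IS !inE /initial adm /=; apply/andP; split; last first.
  apply/eqP/setP=> x; rewrite !inE; apply/negbTE/existsPn=> y.
  by rewrite in_set1; apply/nandP; case: eqP=> [->|]; [right; exact: na|left].
apply/andP; split; first by apply/set0Pn; exists a; rewrite set11.
apply/forallP=> S'; apply/implyP=> /properP [sub [y yA yS]].
move: sub; rewrite subset1 => /orP [/eqP eS | /eqP ->].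
  by rewrite eS yA in yS.
by rewrite eqxx.
Qed.

Lemma red2 (G : AF T) S : (reduct G S).2 = G.2 :&: setX (args (reduct G S)) (args (reduct G S)).
Proof. by []. Qed.
Lemma red_sub (G : AF T) S x : x \in args (reduct G S) -> x \in args G.
Proof. by rewrite /args /reduct /= in_setD => /andP []. Qed.

Definition inv S := admissible F S /\ forall E, complete F E -> S \subset E.

Lemma adm_plus S x : admissible F S -> x \in S -> x \notin plus F S.
Proof.
case/and3P=> _ /forallP cf _ xS; rewrite in_plus; apply/existsPn=> b.
case bS: (b \in S) => //=.
by move: (cf b) => /implyP /(_ bS) /forallP /(_ x) /implyP /(_ xS).
Qed.

Lemma attacker_in_plus S S' x b : inv S -> S' \in IS_u (reduct F S) ->
  x \in S' -> att F b x -> b \in plus F S.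
Proof.
move=> [admS _]; rewrite /IS_u !inE /initial => /andP [/and3P [_ admS' _] /eqP m0].
move=> xS' bx.
have xA' : x \in args (reduct F S) by case/and3P: admS' => /subsetP sub _ _; exact: sub.
case/andP: (wf_att bx) => bA _.
case bA': (b \in args (reduct F S)).
  have : b \in minus (reduct F S) S'.
    rewrite inE; apply/existsP; exists x; rewrite xS' /= att_red bx bA' xA' //.
  by rewrite m0 inE.
move: bA'; rewrite args_red bA andbT => /nandP [/negbNE bS | /negbNE bp]; last by rewrite -in_plus.
move: xA'; rewrite args_red => /and3P [_ + _]; rewrite in_plus => /existsPn /(_ b).
by rewrite bS bx.
Qed.

Lemma step_inv S S' : inv S -> S' \in IS_u (reduct F S) -> inv (S :|: S').
Proof.
move=> iS HS'; have [admS allE] := iS.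
have HS'c := HS'.
rewrite /IS_u !inE /initial in HS'c.
case/andP: HS'c => /and3P [_ admS' _] _.
have subA' : S' \subset args (reduct F S) by case/and3P: admS'.
have xnS : forall x, x \in S' -> x \notin S /\ x \notin plus F S.
  move=> x /(subsetP subA'); rewrite args_red; by case/and3P.
have defx : forall x, x \in S' -> defends F S x.
  move=> x xS'; apply/forallP=> b; apply/implyP=> bx.
  by have := attacker_in_plus iS HS' xS' bx; rewrite in_plus.
have defS : forall x, x \in S -> defends F S x.
  by case/and3P: admS => _ _ /forallP d x xS; have /implyP := d x; apply.
have defmono : forall x, defends F S x -> defends F (S :|: S') x.
  move=> x /forallP d; apply/forallP=> b; apply/implyP=> bx.
  have /implyP /(_ bx) /existsP [c /andP [cS cb]] := d b.
  by apply/existsP; exists c; rewrite in_setU cS cb.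
split; last first.
  move=> E cE; rewrite subUset allE //=; apply/subsetP=> x xS'.
  case/andP: cE => admE /forallP cmp.
  have xA : x \in args F by have := subsetP subA' x xS'; rewrite args_red; case/and3P.
  have SE : S \subset E by apply: allE; rewrite /complete admE; apply/forallP.
  have dE : defends F E x.
    apply/forallP=> b; apply/implyP=> bx.
    have /forallP /(_ b) /implyP /(_ bx) /existsP [c /andP [cS cb]] := defx x xS'.
    by apply/existsP; exists c; rewrite (subsetP SE) ?cS.
  by move: (cmp x) => /implyP /(_ xA) /implyP /(_ dE).
rewrite /admissible; apply/and3P; split.
- rewrite subUset; case/and3P: admS => -> _ _ /=.
  apply/subsetP=> x /(subsetP subA'); rewrite args_red; by case/and3P.
- apply/forallP=> a; apply/implyP=> aU; apply/forallP=> b; apply/implyP=> bU.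
  apply/negP=> ab.
  move: bU; rewrite in_setU => /orP [bS | bS'].
    have /forallP /(_ a) /implyP /(_ ab) /existsP [c /andP [cS ca]] := defS b bS.
    move: aU; rewrite in_setU => /orP [aS | aS'].
      by case/and3P: admS => _ /forallP /(_ c) /implyP /(_ cS) /forallP /(_ a) /implyP /(_ aS);
         rewrite ca.
    case: (xnS a aS') => _; rewrite in_plus => /existsPn /(_ c); by rewrite cS ca.
  have bp := attacker_in_plus iS HS' bS' ab.
  move: aU; rewrite in_setU => /orP [aS | aS'].
    by case: (xnS b bS') => _; rewrite in_plus => /existsPn /(_ a); rewrite aS ab.
  by case: (xnS a aS') => _; rewrite bp.
- apply/forallP=> x; apply/implyP; rewrite in_setU => /orP [xS | xS'].
    exact/defmono/defS.
  exact/defmono/defx.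
Qed.

Lemma args_redG (G : AF T) S x :
  (x \in args (reduct G S)) = [&& x \notin S, x \notin plus G S & x \in args G].
Proof. by rewrite /args /reduct /= in_setD in_setU negb_or andbA. Qed.

Lemma plus_U (S S' : {set T}) : plus F (S :|: S') = plus F S :|: plus F S'.
Proof.
apply/setP=> x; rewrite in_setU !in_plus; apply/existsP/orP.
  by case=> b /andP []; rewrite in_setU => /orP [] bS bx; [left|right];
     apply/existsP; exists b; rewrite bS.
by case=> /existsP [b /andP [bS bx]]; exists b; rewrite in_setU bS ?orbT.
Qed.

Lemma plus_red (S S' : {set T}) x : S' \subset args (reduct F S) ->
  x \in args (reduct F S) -> (x \in plus (reduct F S) S') = (x \in plus F S').
Proof.
move=> /subsetP sub xA; rewrite !in_plus; apply/existsP/existsP=> [] [b /andP [bS bx]];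
  exists b; rewrite bS /=.
  by move: bx; rewrite att_red => /andP [].
by rewrite att_red bx xA sub.
Qed.

Lemma red_comp (S S' : {set T}) : S' \subset args (reduct F S) ->
  reduct (reduct F S) S' = reduct F (S :|: S').
Proof.
move=> sub.
have eA : args (reduct (reduct F S) S') = args (reduct F (S :|: S')).
  apply/setP=> x; rewrite [RHS]args_red args_redG plus_U.
  case xA': (x \in args (reduct F S)).
    rewrite plus_red //; move: xA'; rewrite args_red => /and3P [xS xp xA].
    by rewrite !in_setU (negbTE xS) (negbTE xp) xA /= !andbT.
  rewrite andbF; move: xA'; rewrite args_red !in_setU.
  by case: (x \in S); case: (x \in plus F S); case: (x \in args F); rewrite /= ?andbF.
rewrite [LHS]surjective_pairing [RHS]surjective_pairing !red2 -eA; congr pair.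
  exact: eA.
apply/setP=> [[a b]]; rewrite !in_setI !in_setX.
case ha: (a \in args (reduct (reduct F S) S')); case hb: (b \in args (reduct (reduct F S) S'));
  rewrite ?andbF //= !andbT (red_sub ha) (red_sub hb); by case: ((a, b) \in F.2).
Qed.

Lemma reduct0 : reduct F set0 = F.
Proof.
have e : plus F set0 = set0.
  by apply/setP=> x; rewrite in_plus in_set0; apply/existsP=> -[b]; rewrite in_set0.
rewrite /reduct e setU0 setD0 /args.
move: wfF; rewrite /wf_AF; case: F => A R /= wf.
by rewrite (setIidPl wf).
Qed.

Lemma inv0 : inv set0.
Proof.
split; last by move=> E _; exact: sub0set.
rewrite /admissible sub0set /=; apply/andP; split; apply/forallP=> a; by rewrite in_set0.
Qed.

Lemma ISu_sub (G : AF T) S' : S' \in IS_u G -> S' \subset args G.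
Proof. by rewrite /IS_u /IS !inE /initial => /andP [/and3P [_ /and3P [] ]]. Qed.

Lemma ISu_n0 (G : AF T) S' : S' \in IS_u G -> S' != set0.
Proof. by rewrite /IS_u /IS !inE /initial => /andP [/and3P [] ]. Qed.

Lemma reach_inv s : reach (alpha_gr T) (F, set0) s ->
  exists S, s = (reduct F S, S) /\ inv S.
Proof.
move=> r; have := clos_rt_rtn1 _ _ _ _ r; clear r; elim=> [|y z st _ [S [ey iS]]].
  by exists set0; split; [rewrite reduct0 | exact: inv0].
case: st => S'; rewrite ey /= => HS' ->.
exists (S :|: S'); split; last exact: step_inv.
by rewrite red_comp //; exact: ISu_sub HS'.
Qed.

Lemma terminal S : inv S -> IS_u (reduct F S) = set0 -> grounded_ext F S.
Proof.
move=> [admS allE] H0.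
have cfS : forall d c, d \in S -> c \in S -> ~~ att F d c.
  move=> d c dS cS; case/and3P: admS => _ /forallP /(_ d) /implyP /(_ dS) /forallP /(_ c)
    /implyP /(_ cS) //.
have cS : complete F S.
  rewrite /complete admS /=; apply/forallP=> a; apply/implyP=> aA; apply/implyP=> da.
  apply/negPn/negP=> naS.
  have nap : a \notin plus F S.
    rewrite in_plus; apply/existsPn=> c; apply/negP=> /andP [cS ca].
    move/forallP: da => /(_ c) /implyP /(_ ca) /existsP [d /andP [dS dc]].
    by have := cfS d c dS cS; rewrite dc.
  have aA' : a \in args (reduct F S) by rewrite args_red naS nap aA.
  case: (boolP [exists b, att (reduct F S) b a]) => [/existsP [b ba] | /existsPn nb].
    move: ba; rewrite att_red => /and3P [ba bA' _].
    move/forallP: da => /(_ b) /implyP /(_ ba) /existsP [c /andP [cS cb]].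
    move: bA'; rewrite args_red => /and3P [_ + _]; rewrite in_plus => /existsPn /(_ c).
    by rewrite cS cb.
  by have := single_ISu aA' nb; rewrite H0 in_set0.
split=> // S' cS' sub; apply/eqP; rewrite eqEsubset sub allE //.
Qed.

Lemma exists_term n S : #|args (reduct F S)| <= n ->
  reach (alpha_gr T) (F, set0) (reduct F S, S) ->
  exists S2, reach (alpha_gr T) (F, set0) (reduct F S2, S2) /\ IS_u (reduct F S2) = set0.
Proof.
elim: n S => [|n IH] S hn r.
  exists S; split=> //; apply/eqP; apply/set0Pn=> -[S' HS'].
  case/set0Pn: (ISu_n0 HS') => y yS'; have := subsetP (ISu_sub HS') y yS'.
  by move: hn; rewrite leqn0 => /eqP /card0_eq ->.
case: (boolP (IS_u (reduct F S) == set0)) => [/eqP H0|/set0Pn [S' HS']].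
  by exists S.
have sub := ISu_sub HS'.
apply: (IH (S :|: S')).
  rewrite -red_comp //; rewrite -ltnS; apply: leq_trans hn.
  apply: proper_card; apply/properP; split.
    by apply/subsetP=> x; exact: red_sub.
  case/set0Pn: (ISu_n0 HS') => y yS'; exists y; first exact: (subsetP sub).
  by rewrite args_redG yS'.
apply: rt_trans r _; apply: rt_step; exists S' => //.
by rewrite red_comp.
Qed.

End Proof.

Theorem theorem4 (T : finType) :
  serialisable (@grounded_sem T) (@alpha_gr T) (@beta_co T).
Proof.
move=> F wfF S; split.
  move=> [cG minG].
  have r0 : reach (alpha_gr T) (F, set0) (reduct F set0, set0).
    by rewrite (reduct0 wfF); exact: rt_refl.
  have [S2 [r H0]] := exists_term (leqnn #|args (reduct F set0)|) r0.
  have [S0 [e iS]] := reach_inv wfF r; have eS2 : S0 = S2 by case: e.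
  subst S0.
  have gS2 := terminal iS H0.
  have eS : S2 = S by apply: minG; [case: gS2 | case: iS => _ /(_ S cG)].
  subst S2; exists (reduct F S); split=> //=; exact/eqP.
move=> [F' [r b]].
have [S0 [e iS]] := reach_inv wfF r; have eS2 : S0 = S by case: e.
subst S0; have eF : F' = reduct F S by case: e.
subst F'.
by apply: terminal iS _; apply/eqP.
Qed.
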